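(* Let $\Gamma$ be a set and $\Lambda:\Gamma\to\mathbb R^{m\times m}$ with sparsity pattern $S$. Let $L\in\mathbb R^{m\times m}$ be invertible and let $\hat S$ be the sparsity pattern of $\hat\Lambda(\cdot):=L^\top\Lambda(\cdot)L$. Let $\sigma$ be a permutation of $\{1,\dots,m\}$ with $L_{i,\sigma(i)}\neq0$ for all $i$ (such a $\sigma$ exists since $L$ is invertible) and $P$ its permutation matrix, $Pe_i=e_{\sigma(i)}$. Assume $\operatorname{span}(\Lambda(\Gamma))=\mathbb R^{m\times m}_S$. Then $S\subset P^\top\hat SP$ (as sets of nonzero entries). If moreover $\|\hat S\|_0\le\|S\|_0$, then $S=P^\top\hat SP$ and $L=CP^\top$ for some matrix $C$ that is both $S$-consistent and $S^\top$-consistent.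
   Context: Sparsity pattern: for $\Lambda:\Gamma\to\mathbb R^{m\times n}$, its sparsity pattern is the binary matrix $S$ with $S_{i,j}=1$ iff there exists $\gamma\in\Gamma$ with $\Lambda_{i,j}(\gamma)\neq0$. $\mathbb R^{m\times n}_B=\{M\in\mathbb R^{m\times n}: B_{ij}=0\Rightarrow M_{ij}=0\}$. $\|\cdot\|_0$ counts nonzero entries. $S$-consistency: for $S\in\{0,1\}^{m\times n}$, $C\in\mathbb R^{m\times m}$ is $S$-consistent iff for all $i,j$: $[\mathbb 1-S(\mathbb 1-S)^\top]^+_{i,j}=0\Rightarrow C_{i,j}=0$, with $[\cdot]^+=\max\{0,\cdot\}$ entrywise and $\mathbb 1$ an all-ones matrix of appropriate size. *)

(* Defs.v *)
From HB Require Import structures.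
From mathcomp Require Import all_boot all_order all_algebra all_fingroup.
Set Implicit Arguments. Unset Strict Implicit. Unset Printing Implicit Defensive.
Import Order.TTheory GRing.Theory Num.Theory.
Local Open Scope ring_scope.

Definition is_sparsity_pattern (R : ringType) (Gamma : Type) (m n : nat)
  (Lam : Gamma -> 'M[R]_(m, n)) (S : 'M[bool]_(m, n)) : Prop :=
  forall i j, S i j = true <-> exists g : Gamma, Lam g i j != 0.

Definition bmx (R : ringType) (m n : nat) (S : 'M[bool]_(m, n)) : 'M[R]_(m, n) :=
  map_mx (fun b : bool => (b : nat)%:R) S.

Definition in_span (R : ringType) (Gamma : Type) (m n : nat)
  (Lam : Gamma -> 'M[R]_(m, n)) (M : 'M[R]_(m, n)) : Prop :=
  exists (k : nat) (g : 'I_k -> Gamma) (c : 'I_k -> R),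
    M = \sum_(l < k) c l *: Lam (g l).

Definition span_eq_patterned (R : ringType) (Gamma : Type) (m n : nat)
  (Lam : Gamma -> 'M[R]_(m, n)) (S : 'M[bool]_(m, n)) : Prop :=
  forall M : 'M[R]_(m, n),
    in_span Lam M <-> (forall i j, S i j = false -> M i j = 0).

Definition mx_norm0 (R : ringType) (m n : nat) (M : 'M[R]_(m, n)) : nat :=
  #|[set p : 'I_m * 'I_n | M p.1 p.2 != 0]|.

Definition ones_mx (R : ringType) (m n : nat) : 'M[R]_(m, n) := const_mx 1.

Definition consistent (R : realDomainType) (m n : nat) (S : 'M[bool]_(m, n))
  (C : 'M[R]_m) : Prop :=
  forall i j : 'I_m,
    Num.max 0 ((ones_mx R m m - bmx R S *m (ones_mx R m n - bmx R S)^T) i j) = 0 ->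
    C i j = 0.

(* Permutation matrix P of sigma with P e_i = e_{sigma i}, i.e. P_{k,i} = [k = sigma i]. *)
Definition pmx (R : ringType) (m : nat) (s : 'S_m) : 'M[R]_m :=
  \matrix_(k < m, i < m) ((k == s i) : nat)%:R.

(* Main.v *)
Require Import Defs.
From HB Require Import structures.
From mathcomp Require Import all_boot all_order all_algebra all_fingroup.
Import Order.TTheory GRing.Theory Num.Theory.
Local Open Scope ring_scope.

Lemma sum_indl (R : ringType) m (F : 'I_m -> R) (c : 'I_m) :
  \sum_k ((k == c) : nat)%:R * F k = F c.
Proof.
rewrite (bigD1 c) //= eqxx mul1r big1 ?addr0 // => k /negbTE ->; exact: mul0r.
Qed.

Lemma sum_indr (R : ringType) m (F : 'I_m -> R) (c : 'I_m) :
  \sum_k F k * ((k == c) : nat)%:R = F c.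
Proof.
rewrite (bigD1 c) //= eqxx mulr1 big1 ?addr0 // => k /negbTE ->; exact: mulr0.
Qed.

Lemma pmx_conj (R : ringType) m (s : 'S_m) (A : 'M[R]_m) i j :
  ((pmx R s)^T *m A *m pmx R s) i j = A (s i) (s j).
Proof.
rewrite mxE.
under eq_bigr => l _ do rewrite !mxE.
under eq_bigr => l _ do under eq_bigr => k _ do rewrite !mxE.
under eq_bigr => l _ do rewrite sum_indl.
exact: sum_indr.
Qed.

Lemma delta_conj (R : comRingType) m (L : 'M[R]_m) a b x y :
  (L^T *m delta_mx a b *m L) x y = L a x * L b y.
Proof.
rewrite mxE.
under eq_bigr => l _ do rewrite !mxE.
under eq_bigr => l _ do under eq_bigr => k _ do rewrite !mxE.
under eq_bigr => l _ do under eq_bigr => k _ do rewrite -mulnb natrM mulrA.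
under eq_bigr => l _ do rewrite -big_distrl /= sum_indr.
rewrite (bigD1 b) //= eqxx mulr1 big1 ?addr0 //.
by move=> k /negbTE ->; rewrite mulr0 mul0r.
Qed.

Lemma key (R : realFieldType) (Gamma : Type) (m : nat)
  (Lam : Gamma -> 'M[R]_m) (S : 'M[bool]_m) (L : 'M[R]_m) (Shat : 'M[bool]_m) :
  is_sparsity_pattern Lam S ->
  is_sparsity_pattern (fun g => L^T *m Lam g *m L) Shat ->
  span_eq_patterned Lam S ->
  forall a b a' b', S a b = true -> L a a' != 0 -> L b b' != 0 ->
  Shat a' b' = true.
Proof.
move=> HS HSh Hsp a b a' b' Sab La Lb.
case E: (Shat a' b') => //.
have H0 : forall g, (L^T *m Lam g *m L) a' b' = 0.
  move=> g; apply/eqP; apply: contraFT E => Hne.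
  by apply/(HSh a' b'); exists g.
have : in_span Lam (delta_mx a b).
  apply/Hsp => i j Sij; rewrite mxE.
  case: (eqVneq i a) => [ei|] //=; case: (eqVneq j b) => [ej|] //=.
  by move: Sij; rewrite ei ej Sab.
case=> k [g [c Hd]].
have : (L^T *m delta_mx a b *m L) a' b' = 0.
  rewrite Hd mulmx_sumr mulmx_suml summxE big1 // => l _.
  by rewrite -scalemxAr -scalemxAl mxE H0 mulr0.
by rewrite delta_conj => /eqP; rewrite mulf_eq0 (negbTE La) (negbTE Lb).
Qed.

Lemma bmxE (R : realFieldType) m n (S : 'M[bool]_(m, n)) i j :
  (bmx R S i j != 0) = S i j.
Proof. by rewrite mxE; case: (S i j) => /=; rewrite ?oner_eq0 ?eqxx. Qed.

Lemma cons_lem (R : realFieldType) m (T : 'M[bool]_m) i j :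
  (forall k, T i k -> T j k) ->
  Num.max 0 ((ones_mx R m m - bmx R T *m (ones_mx R m m - bmx R T)^T) i j) != 0.
Proof.
move=> H.
have -> : (ones_mx R m m - bmx R T *m (ones_mx R m m - bmx R T)^T) i j = 1.
  rewrite !mxE big1 ?subr0 // => k _; rewrite !mxE.
  by case E: (T i k); rewrite ?mul0r // (H k) ?E //= subrr mulr0.
by rewrite max_r ?ler01 ?oner_eq0.
Qed.

Theorem mainTheorem3 (R : realFieldType) (Gamma : Type) (m : nat)
  (Lam : Gamma -> 'M[R]_m) (S : 'M[bool]_m) (L : 'M[R]_m) (Shat : 'M[bool]_m)
  (sigma : 'S_m) :
  is_sparsity_pattern Lam S ->
  L \in unitmx ->
  is_sparsity_pattern (fun g => L^T *m Lam g *m L) Shat ->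
  (forall i : 'I_m, L i (sigma i) != 0) ->
  span_eq_patterned Lam S ->
  (forall i j, S i j = true ->
     ((pmx R sigma)^T *m bmx R Shat *m pmx R sigma) i j != 0)
  /\
  ((mx_norm0 (bmx R Shat) <= mx_norm0 (bmx R S))%N ->
     bmx R S = (pmx R sigma)^T *m bmx R Shat *m pmx R sigma /\
     exists C : 'M[R]_m,
       L = C *m (pmx R sigma)^T /\ consistent S C /\ consistent S^T C).
Proof.
move=> HS _ HSh Ls Hsp.
have K := @key R Gamma m Lam S L Shat HS HSh Hsp.
have P1 : forall i j, S i j = true -> Shat (sigma i) (sigma j) = true.
  by move=> i j Sij; apply: (K i j) => //.
split.
  by move=> i j Sij; rewrite pmx_conj bmxE P1.
move=> Hcard.
pose f := fun p : 'I_m * 'I_m => (sigma p.1, sigma p.2).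
have finj : injective f.
  by move=> [x1 x2] [y1 y2] [/perm_inj -> /perm_inj ->].
set A := [set p : 'I_m * 'I_m | bmx R S p.1 p.2 != 0].
set B := [set p : 'I_m * 'I_m | bmx R Shat p.1 p.2 != 0].
have sub : f @: A \subset B.
  apply/subsetP => q /imsetP [p]; rewrite /A /B !inE bmxE => Sp ->.
  by rewrite bmxE /= P1.
have eqAB : f @: A = B.
  by apply/eqP; rewrite eqEcard sub card_imset //.
have P2 : forall i j, S i j = Shat (sigma i) (sigma j).
  move=> i j; apply/idP/idP; first by move/P1.
  move=> H; have : (sigma i, sigma j) \in f @: A by rewrite eqAB /B inE bmxE.
  case/imsetP => p; rewrite /A inE bmxE => Sp E.
  by move: Sp; have -> : p = (i, j) by apply: finj.
split.
  by apply/matrixP => i j; rewrite pmx_conj !mxE P2.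
exists (\matrix_(i, j) L i (sigma j)).
split.
  apply/matrixP => i j; rewrite mxE.
  under eq_bigr => k _ do rewrite !mxE eq_sym.
  rewrite -{1 2}(permKV sigma j).
  under eq_bigr => k _ do rewrite (inj_eq perm_inj).
  by rewrite sum_indr.
have ML : forall i j, (\matrix_(i, j) L i (sigma j)) i j = L i (sigma j).
  by move=> i j; rewrite mxE.
split=> i j; apply: contra_eq; rewrite ML => Hn; apply: cons_lem => k /=.
  move=> Sik; rewrite P2; exact: (K i k _ _ Sik Hn (Ls k)).
rewrite !mxE => Ski; rewrite P2; exact: (K k i _ _ Ski (Ls k) Hn).
Qed.
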